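(* Let $P,Q$ be standard CCSK$^{\mathrm P}$ processes. If $P\approx_{\mathrm{FR}}Q$ then $P\approx_{\mathrm{KP}}Q$.
   Context: Names $\mathsf N$ with bijection $\overline\cdot$ onto disjoint co-names; $\mathsf L=\mathsf N\cup\overline{\mathsf N}\cup\{\tau\}$ ($\alpha$ over $\mathsf L$, $\lambda$ over $\mathsf L\setminus\{\tau\}$); keys $\mathsf K$ denumerable. CCSK processes $X::=\mathbf 0\mid\alpha.X\mid X\backslash\lambda\mid X+Y\mid X|Y\mid\alpha[k].X$; $\mathrm{keys}(X)$ keys in $X$; standard means no keys. Directions $D\in\{\mathrm L,\mathrm R\}$, $\bar{\mathrm L}=\mathrm R$, $\bar{\mathrm R}=\mathrm L$. Proof keyed labels $\theta::=\upsilon\alpha[k]\mid\upsilon\langle\upsilon_1\lambda[k],\upsilon_2\overline\lambda[k]\rangle$ ($\upsilon,\upsilon_i\in\{|_{\mathrm L},|_{\mathrm R},+_{\mathrm L},+_{\mathrm R}\}^*$), $\ell(\upsilon\alpha[k])=\alpha$, $\ell(\upsilon\langle\cdots\rangle)=\tau$, $\mathrm{key}(\theta)=k$. Forward CCSK$^{\mathrm P}$ transitions: least relation closed under (act) $\alpha.X\xrightarrow{\alpha[k]}\alpha[k].X$ if $\mathrm{keys}(X)=\emptyset$; (pre) $X\xrightarrow\theta X',\mathrm{key}(\theta)\ne k\Rightarrow\alpha[k].X\xrightarrow\theta\alpha[k].X'$; (res) $X\xrightarrow\theta X',\ell(\theta)\notin\{\lambda,\overline\lambda\}\Rightarrow X\backslash\lambda\xrightarrow\theta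 X'\backslash\lambda$; (par) $X\xrightarrow\theta X',\mathrm{key}(\theta)\notin\mathrm{keys}(Y)\Rightarrow X|Y\xrightarrow{|_{\mathrm L}\theta}X'|Y$, $Y|X\xrightarrow{|_{\mathrm R}\theta}Y|X'$; (syn) $X\xrightarrow{\upsilon_1\lambda[k]}X',Y\xrightarrow{\upsilon_2\overline\lambda[k]}Y'\Rightarrow X|Y\xrightarrow{\langle\upsilon_1\lambda[k],\upsilon_2\overline\lambda[k]\rangle}X'|Y'$; (sum) $X\xrightarrow\theta X',\mathrm{keys}(Y)=\emptyset\Rightarrow X+Y\xrightarrow{+_{\mathrm L}\theta}X'+Y$, $Y+X\xrightarrow{+_{\mathrm R}\theta}Y+X'$. Backward transitions: $Y\rightsquigarrow^\theta X$ iff $X\xrightarrow\theta Y$; $\bar t$ the inverse. Paths: sequences of composable transitions; rooted if source cannot do a backward transition; $\mathrm{orig}(X)$ is obtained by erasing all keys. Connected transitions: a path from the source of one to the target of the other. Independence $\iota$ on proof labels: least relation closed under (C1) $+_D\theta\mathrel\iota+_D\theta'$ if $\theta\mathrel\iota\theta'$; (P1) $|_D\theta\mathrel\iota|_D\theta'$ if $\theta\mathrel\iota\theta'$; (P2$_k$) $|_D\theta\mathrel\iota|_{\bar D}\theta'$ if keys differ; (S1) $|_D\theta\mathrel\iota\langle\theta_{\mathrm L},\theta_{\mathrm R}\rangle$ if $\theta\mathrel\iota\theta_D$; (S2) $\langle\theta_{\mathrm L},\theta_{\mathrm R}\rangle\mathrel\iota|_D\theta$ if $\theta_D\mathrel\iota\theta$;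 (S3) $\langle\theta_1,\theta_2\rangle\mathrel\iota\langle\theta_1',\theta_2'\rangle$ if $\theta_1\mathrel\iota\theta_1'$, $\theta_2\mathrel\iota\theta_2'$. On transitions $t\mathrel\iota u$ iff connected and labels $\iota$. Events: $\sim$ is the smallest equivalence with $t\sim t'$ whenever $t:P\to Q$, $u:P\to R$, $u':Q\to S$, $t':R\to S$ ($u'$ with label/direction of $u$, $t'$ of $t$) and $t\mathrel\iota u$; events $[t]$; forward events are classes of forward transitions; $\bar e=[\bar t]$; $\ell(e)$, $\mathrm{key}(e)$ are $\ell$ and key of the label of any $t\in e$. $\sharp(\varepsilon,e)=0$, $\sharp(tr,e)=\sharp(r,e)+1$ if $t\in e$, $-1$ if $t\in\bar e$, unchanged otherwise. $\mathrm{ev}(X)$: forward events $e$ with $\sharp(r,e)>0$ for some rooted path $r$ with target $X$. $\le_X$ on $\mathrm{keys}(X)$ is the reflexive transitive closure of $\mathrm{ord}(X)$: $\mathrm{ord}(\mathbf 0)=\emptyset$, $\mathrm{ord}(\alpha.X)=\mathrm{ord}(X\backslash\lambda)=\mathrm{ord}(X)$, $\mathrm{ord}(X+Y)=\mathrm{ord}(X|Y)=\mathrm{ord}(X)\cup\mathrm{ord}(Y)$, $\mathrm{ord}(\alpha[n].X)=\mathrm{ord}(X)\cup\{n<k\mid k\in\mathrm{keys}(X)\}$. A bijection $f:\mathrm{ev}(X)\to\mathrm{ev}(Y)$ is label preserving if $\ell(e)=\ell(f(e))$, order preserving if $\mathrm{key}(e)\le_X\mathrm{key}(e')\iff\mathrm{key}(f(e))\le_Y\mathrm{key}(f(e'))$.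 KP bisimulation between standard $X,Y$: a set $R$ of triples $(X',Y',f')$ with $(X,Y,\emptyset)\in R$ such that whenever $(X',Y',f')\in R$: $f'$ is a label- and order-preserving bijection $\mathrm{ev}(X')\to\mathrm{ev}(Y')$; every forward $t:X'\to X''$ is matched by a forward $t':Y'\to Y''$ with $(X'',Y'',f'\cup\{[t]\mapsto[t']\})\in R$, and every forward $t':Y'\to Y''$ by a forward $t:X'\to X''$ with $(X'',Y'',f'\cup\{[t]\mapsto[t']\})\in R$. $X\approx_{\mathrm{KP}}Y$ iff there is a KP bisimulation between $\mathrm{orig}(X)$ and $\mathrm{orig}(Y)$ containing $(X,Y,f)$ for some $f$. FR bisimulation between $X$ and $Y$: a relation $R$ on processes with $X\mathrel RY$ such that whenever $X'\mathrel RY'$: each forward $X'\xrightarrow\theta X''$ is matched by a forward $Y'\xrightarrow{\theta'}Y''$ with $\ell(\theta)=\ell(\theta')$, $\mathrm{key}(\theta)=\mathrm{key}(\theta')$ and $X''\mathrel RY''$; symmetrically for forward transitions of $Y'$; and the same two conditions for backward transitions. $X\approx_{\mathrm{FR}}Y$ iff there is an FR bisimulation between $X$ and $Y$. *)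

(* Defs.v *)
From Stdlib Require Import List ZArith Relations ClassicalEpsilon.
Import ListNotations.

(* Names N := nat; co-names are a disjoint copy; keys K := nat (denumerable). *)
Inductive vis : Type := Nm (n : nat) | CoNm (n : nat).
Definition co (l : vis) : vis :=
  match l with Nm n => CoNm n | CoNm n => Nm n end.
Inductive act : Type := Vis (l : vis) | Tau.

Inductive proc : Type :=
| Nil : proc
| Pre : act -> proc -> proc
| Res : proc -> vis -> proc
| Sum : proc -> proc -> proc
| Par : proc -> proc -> proc
| Keyed : act -> nat -> proc -> proc.

Fixpoint inkeys (k : nat) (X : proc) : Prop :=
  match X with
  | Nil => False
  | Pre _ X => inkeys k X
  | Res X _ => inkeys k X
  | Sum X Y => inkeys k X \/ inkeys k Y
  | Par X Y => inkeys k X \/ inkeys k Y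
  | Keyed _ n X => k = n \/ inkeys k X
  end.

Definition nokeys (X : proc) : Prop := forall k, ~ inkeys k X.
Definition standard (X : proc) : Prop := nokeys X.

Fixpoint orig (X : proc) : proc :=
  match X with
  | Nil => Nil
  | Pre a X => Pre a (orig X)
  | Res X l => Res (orig X) l
  | Sum X Y => Sum (orig X) (orig Y)
  | Par X Y => Par (orig X) (orig Y)
  | Keyed a _ X => Pre a (orig X)
  end.

Inductive dir : Type := DL | DR.
Definition dbar (d : dir) : dir := match d with DL => DR | DR => DL end.
Inductive tag : Type := TPar (d : dir) | TSum (d : dir).

(* upsilon alpha[k]   and   upsilon <upsilon1 lambda[k], upsilon2 co(lambda)[k]> *)
Inductive plabel : Type :=
| Base : list tag -> act -> nat -> plabel
| Syn : list tag -> list tag -> vis -> list tag -> nat -> plabel.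

Definition pre (t : tag) (th : plabel) : plabel :=
  match th with
  | Base u a k => Base (t :: u) a k
  | Syn u u1 l u2 k => Syn (t :: u) u1 l u2 k
  end.

Definition lab_act (th : plabel) : act :=
  match th with Base _ a _ => a | Syn _ _ _ _ _ => Tau end.
Definition lab_key (th : plabel) : nat :=
  match th with Base _ _ k => k | Syn _ _ _ _ k => k end.

(* the D-component theta_D of <theta_L, theta_R> *)
Definition syn_comp (d : dir) (u1 : list tag) (l : vis) (u2 : list tag) (k : nat)
  : plabel :=
  match d with DL => Base u1 (Vis l) k | DR => Base u2 (Vis (co l)) k end.

Inductive step : proc -> plabel -> proc -> Prop :=
| st_act : forall a k X, nokeys X -> step (Pre a X) (Base [] a k) (Keyed a k X)
| st_pre : forall a k X th X', step X th X' -> lab_key th <> k ->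
    step (Keyed a k X) th (Keyed a k X')
| st_res : forall l X th X', step X th X' ->
    lab_act th <> Vis l -> lab_act th <> Vis (co l) ->
    step (Res X l) th (Res X' l)
| st_parL : forall X Y th X', step X th X' -> ~ inkeys (lab_key th) Y ->
    step (Par X Y) (pre (TPar DL) th) (Par X' Y)
| st_parR : forall X Y th X', step X th X' -> ~ inkeys (lab_key th) Y ->
    step (Par Y X) (pre (TPar DR) th) (Par Y X')
| st_syn : forall X Y X' Y' u1 u2 l k,
    step X (Base u1 (Vis l) k) X' -> step Y (Base u2 (Vis (co l)) k) Y' ->
    step (Par X Y) (Syn [] u1 l u2 k) (Par X' Y')
| st_sumL : forall X Y th X', step X th X' -> nokeys Y ->
    step (Sum X Y) (pre (TSum DL) th) (Sum X' Y)
| st_sumR : forall X Y th X', step X th X' -> nokeys Y ->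
    step (Sum Y X) (pre (TSum DR) th) (Sum Y X').

Record tr : Type := Tr { src : proc; lab : plabel; fwd : bool; tgt : proc }.
Definition valid (t : tr) : Prop :=
  if fwd t then step (src t) (lab t) (tgt t) else step (tgt t) (lab t) (src t).
Definition inv (t : tr) : tr := Tr (tgt t) (lab t) (negb (fwd t)) (src t).

Inductive path : proc -> list tr -> proc -> Prop :=
| path_nil : forall P, path P [] P
| path_cons : forall t r Q, valid t -> path (tgt t) r Q -> path (src t) (t :: r) Q.

Definition rooted (P : proc) : Prop := ~ exists th P', step P' th P.

Definition connected (t u : tr) : Prop := exists r, path (src t) r (tgt u).

Inductive indep : plabel -> plabel -> Prop :=
| ind_C1 : forall d th th', indep th th' -> indep (pre (TSum d) th) (pre (TSum d) th')
| ind_P1 : forall d th th', indep th th' -> indep (pre (TPar d) th) (pre (TPar d) th')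
| ind_P2 : forall d th th', lab_key th <> lab_key th' ->
    indep (pre (TPar d) th) (pre (TPar (dbar d)) th')
| ind_S1 : forall d th u1 l u2 k, indep th (syn_comp d u1 l u2 k) ->
    indep (pre (TPar d) th) (Syn [] u1 l u2 k)
| ind_S2 : forall d th u1 l u2 k, indep (syn_comp d u1 l u2 k) th ->
    indep (Syn [] u1 l u2 k) (pre (TPar d) th)
| ind_S3 : forall u1 l u2 k u1' l' u2' k',
    indep (Base u1 (Vis l) k) (Base u1' (Vis l') k') ->
    indep (Base u2 (Vis (co l)) k) (Base u2' (Vis (co l')) k') ->
    indep (Syn [] u1 l u2 k) (Syn [] u1' l' u2' k').

Definition indep_tr (t u : tr) : Prop := connected t u /\ indep (lab t) (lab u).

Inductive sim : tr -> tr -> Prop :=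
| sim_square : forall t u u' t',
    valid t -> valid u -> valid u' -> valid t' ->
    src u = src t -> src u' = tgt t -> src t' = tgt u -> tgt t' = tgt u' ->
    lab u' = lab u -> fwd u' = fwd u -> lab t' = lab t -> fwd t' = fwd t ->
    indep_tr t u -> sim t t'
| sim_refl : forall t, sim t t
| sim_sym : forall t t', sim t t' -> sim t' t
| sim_trans : forall t1 t2 t3, sim t1 t2 -> sim t2 t3 -> sim t1 t3.

Definition event := tr -> Prop.
Definition cls (t : tr) : event := fun u => sim t u.
Definition ebar (e : event) : event :=
  fun u => exists t, e t /\ sim (inv t) u.
Definition fwd_event (e : event) : Prop :=
  exists t, fwd t = true /\ valid t /\ e = cls t.

Definition dec (P : Prop) : {P} + {~ P} := excluded_middle_informative P.

Fixpoint sharp (r : list tr) (e : event) : Z :=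
  match r with
  | [] => 0%Z
  | t :: r' => (sharp r' e +
      (if dec (e t) then 1 else if dec (ebar e t) then -1 else 0))%Z
  end.

Definition in_ev (X : proc) (e : event) : Prop :=
  fwd_event e /\ exists P r, rooted P /\ path P r X /\ (sharp r e > 0)%Z.

Fixpoint ord (X : proc) : nat -> nat -> Prop :=
  match X with
  | Nil => fun _ _ => False
  | Pre _ X => ord X
  | Res X _ => ord X
  | Sum X Y => fun a b => ord X a b \/ ord Y a b
  | Par X Y => fun a b => ord X a b \/ ord Y a b
  | Keyed _ n X => fun a b => ord X a b \/ (a = n /\ inkeys b X)
  end.
Definition leX (X : proc) : nat -> nat -> Prop := clos_refl_trans nat (ord X).

(* bijections between sets of events, given by their graphs *)
Definition evmap := event -> event -> Prop.

Definition is_bij (F : evmap) (A B : event -> Prop) : Prop :=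
  (forall e e', F e e' -> A e /\ B e') /\
  (forall e, A e -> exists e', F e e') /\
  (forall e e1 e2, F e e1 -> F e e2 -> e1 = e2) /\
  (forall e1 e2 e', F e1 e' -> F e2 e' -> e1 = e2) /\
  (forall e', B e' -> exists e, F e e').

Definition label_preserving (F : evmap) : Prop :=
  forall e e', F e e' -> forall t t', e t -> e' t' ->
    lab_act (lab t) = lab_act (lab t').

Definition order_preserving (X Y : proc) (F : evmap) : Prop :=
  forall e1 e1' e2 e2', F e1 e1' -> F e2 e2' ->
  forall t1 t2 t1' t2', e1 t1 -> e2 t2 -> e1' t1' -> e2' t2' ->
    (leX X (lab_key (lab t1)) (lab_key (lab t2)) <->
     leX Y (lab_key (lab t1')) (lab_key (lab t2'))).

Definition ext (F : evmap) (e e' : event) : evmap :=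
  fun a b => F a b \/ (a = e /\ b = e').

Definition empty_map : evmap := fun _ _ => False.

Definition KP_bisim (R : proc -> proc -> evmap -> Prop) (X Y : proc) : Prop :=
  R X Y empty_map /\
  forall X' Y' F, R X' Y' F ->
    (is_bij F (in_ev X') (in_ev Y') /\ label_preserving F /\
     order_preserving X' Y' F) /\
    (forall th X'', step X' th X'' -> exists th' Y'', step Y' th' Y'' /\
       R X'' Y'' (ext F (cls (Tr X' th true X'')) (cls (Tr Y' th' true Y'')))) /\
    (forall th' Y'', step Y' th' Y'' -> exists th X'', step X' th X'' /\
       R X'' Y'' (ext F (cls (Tr X' th true X'')) (cls (Tr Y' th' true Y'')))).

Definition KP_equiv (X Y : proc) : Prop :=
  exists R F, KP_bisim R (orig X) (orig Y) /\ R X Y F.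

Definition FR_bisim (R : proc -> proc -> Prop) : Prop :=
  forall X' Y', R X' Y' ->
    (forall th X'', step X' th X'' -> exists th' Y'', step Y' th' Y'' /\
       lab_act th = lab_act th' /\ lab_key th = lab_key th' /\ R X'' Y'') /\
    (forall th' Y'', step Y' th' Y'' -> exists th X'', step X' th X'' /\
       lab_act th = lab_act th' /\ lab_key th = lab_key th' /\ R X'' Y'') /\
    (forall th X'', step X'' th X' -> exists th' Y'', step Y'' th' Y' /\
       lab_act th = lab_act th' /\ lab_key th = lab_key th' /\ R X'' Y'') /\
    (forall th' Y'', step Y'' th' Y' -> exists th X'', step X'' th X' /\
       lab_act th = lab_act th' /\ lab_key th = lab_key th' /\ R X'' Y'').

Definition FR_equiv (X Y : proc) : Prop := exists R, FR_bisim R /\ R X Y.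

(* Main.v *)
Require Import Defs.
From Stdlib Require Import Lia List ZArith Relations ClassicalEpsilon Classical FunctionalExtensionality PropExtensionality.
Import ListNotations.

Lemma lab_key_pre : forall t th, lab_key (pre t th) = lab_key th.
Proof. intros t th; destruct th; reflexivity. Qed.
Lemma lab_act_pre : forall t th, lab_act (pre t th) = lab_act th.
Proof. intros t th; destruct th; reflexivity. Qed.

Lemma step_tgt_key : forall X th X', step X th X' -> inkeys (lab_key th) X'.
Proof.
  intros X th X' H; induction H; simpl; try rewrite lab_key_pre; auto.

Qed.

Lemma step_fresh : forall X th X', step X th X' -> ~ inkeys (lab_key th) X.
Proof.
  intros X th X' H; induction H; simpl; try rewrite lab_key_pre; auto.
  - intros [E|E]; auto.
  - intros [E|E]; auto.
  - intros [E|E]; auto.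
  - simpl in *. intros [E|E]; auto.
  - intros [E|E]; auto. apply H0 in E; auto.
  - intros [E|E]; auto. apply H0 in E; auto.
Qed.

Lemma step_keys : forall X th X', step X th X' ->
  forall j, inkeys j X' <-> inkeys j X \/ j = lab_key th.
Proof.
  intros X th X' H; induction H; intro j; simpl; try rewrite lab_key_pre.
  - split; [intros [E|E]; auto|intros [E|E]; auto; destruct (H j E)].
  - rewrite IHstep. tauto.
  - apply IHstep.
  - rewrite IHstep. tauto.
  - rewrite IHstep. tauto.
  - simpl in *. rewrite IHstep1, IHstep2. tauto.
  - rewrite IHstep. tauto.
  - rewrite IHstep. tauto.
Qed.

Lemma step_keys_mono : forall X th X', step X th X' -> forall j, inkeys j X -> inkeys j X'.
Proof. intros. apply (step_keys _ _ _ H). auto. Qed.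

Lemma nokeys_orig : forall X, nokeys X -> orig X = X.
Proof.
  unfold nokeys; induction X; simpl; intros H; auto.
  - rewrite IHX; auto.
  - rewrite IHX; auto.
  - rewrite IHX1, IHX2; auto; intros k Hk; apply (H k); auto.
  - rewrite IHX1, IHX2; auto; intros k Hk; apply (H k); auto.
  - exfalso; apply (H n); auto.
Qed.

Lemma ord_keys : forall X a b, ord X a b -> inkeys a X /\ inkeys b X.
Proof.
  induction X; simpl; intros a0 b0 H; try tauto; auto.
  - destruct H as [H|H]; [apply IHX1 in H|apply IHX2 in H]; tauto.
  - destruct H as [H|H]; [apply IHX1 in H|apply IHX2 in H]; tauto.
  - destruct H as [H|[H1 H2]]; [apply IHX in H; tauto| subst; tauto].
Qed.

Lemma nokeys_ord : forall X a b, nokeys X -> ~ ord X a b.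
Proof. intros X a b H H'. apply ord_keys in H'. destruct H'. apply (H a); auto. Qed.

Lemma ord_mono : forall X th X', step X th X' -> forall a b, ord X a b -> ord X' a b.
Proof.
  intros X th X' H; induction H; simpl; intros a0 b0 Ho; auto.
  - destruct Ho as [Ho|[E Ho]]; auto. right; split; auto. eapply step_keys_mono; eauto.
  - destruct Ho; auto.
  - destruct Ho; auto.
  - destruct Ho; auto.
  - destruct Ho; auto.
  - destruct Ho; auto.
Qed.

Lemma ord_new_max : forall X th X', step X th X' -> forall b, ~ ord X' (lab_key th) b.
Proof.
  intros X th X' H; induction H; simpl; try rewrite lab_key_pre; intros b0 Ho.
  - destruct Ho as [Ho|[_ Ho]]. apply (nokeys_ord _ _ _ H Ho). apply (H b0); auto.
  - destruct Ho as [Ho|[E _]]; [eapply IHstep; eauto| auto].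
  - eapply IHstep; eauto.
  - destruct Ho as [Ho|Ho]; [eapply IHstep; eauto| apply ord_keys in Ho; tauto].
  - destruct Ho as [Ho|Ho]; [apply ord_keys in Ho; tauto|eapply IHstep; eauto].
  - simpl in *. destruct Ho as [Ho|Ho]; [eapply IHstep1; eauto|eapply IHstep2; eauto].
  - destruct Ho as [Ho|Ho]; [eapply IHstep; eauto| apply (nokeys_ord _ _ _ H0 Ho)].
  - destruct Ho as [Ho|Ho]; [apply (nokeys_ord _ _ _ H0 Ho)|eapply IHstep; eauto].
Qed.

Lemma ord_back : forall X th X', step X th X' -> forall a b, ord X' a b ->
  b <> lab_key th -> ord X a b.
Proof.
  intros X th X' H; induction H; simpl; try rewrite lab_key_pre; intros a0 b0 Ho Hb.
  - destruct Ho as [Ho|[_ Ho]]. destruct (nokeys_ord _ _ _ H Ho). destruct (H b0); auto.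
  - destruct Ho as [Ho|[E Ho]]; [left; eauto| right; split; auto].
    apply (step_keys _ _ _ H) in Ho. destruct Ho; tauto.
  - eauto.
  - destruct Ho; eauto.
  - destruct Ho; eauto.
  - simpl in *; destruct Ho; eauto.
  - destruct Ho; eauto.
  - destruct Ho; eauto.
Qed.
Ltac kc := exfalso; match goal with
 | Hs : step _ _ ?Z, Hn : nokeys ?Z |- _ => apply (Hn _ (step_tgt_key _ _ _ Hs))
 | Hs : step _ _ ?Z, Hn : ~ inkeys _ ?Z |- _ => apply Hn;
     let KK := fresh "KK" in pose proof (step_tgt_key _ _ _ Hs) as KK; simpl in KK;
     try rewrite lab_key_pre in KK;
     first [exact KK | match goal with E : ?a = ?b |- _ => first [rewrite E in KK; exact KK | rewrite <- E in KK; exact KK] end | subst; exact KK]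
 end.

Lemma step_det : forall A th B, step A th B -> forall A' th', step A' th' B ->
  lab_key th = lab_key th' -> A = A' /\ th = th'.
Proof.
  intros A th B H; induction H; intros A' th' H' Hk; inversion H'; subst;
    simpl in *; try rewrite !lab_key_pre in *; try kc;
  try match goal with IH : forall A' th', step A' th' ?X -> _ -> _, Hs : step _ _ ?X |- _ =>
    destruct (IH _ _ Hs) as [? ?]; subst; auto end.
  all: try (split; reflexivity).
  match goal with H1 : step ?X0 _ ?X', IH : forall A' th', step A' th' ?X' -> _ -> _ |- _ =>
    destruct (IH _ _ H1 eq_refl) as [E1 E2] end.
  inversion E2; subst; match goal with H2 : Base _ _ _ = Base _ _ _ |- _ => inversion H2 end; subst; auto.
Qed.
Lemma notin_back : forall X th X' k, step X th X' -> ~ inkeys k X' -> ~ inkeys k X.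
Proof. intros X th X' k H H1 H2. apply H1. eapply step_keys_mono; eauto. Qed.

Lemma nokeys_back : forall X th X', step X th X' -> nokeys X' -> nokeys X.
Proof. intros X th X' H H1 k. eapply notin_back; eauto. Qed.

Ltac stp := first [ solve [eapply st_act; eauto using notin_back]
  | solve [eapply st_pre; eauto using notin_back]
  | solve [eapply st_res; eauto using notin_back]
  | solve [eapply st_parL; eauto using notin_back]
  | solve [eapply st_parR; eauto using notin_back]
  | solve [eapply st_syn; eauto using notin_back]
  | solve [eapply st_sumL; eauto using notin_back, nokeys_back]
  | solve [eapply st_sumR; eauto using notin_back, nokeys_back] ].

Ltac ihd D D1 D2 := match goal with IH : forall C th2, step C th2 ?X' -> _ -> exists D, _,
   Hs : step _ _ ?X' |- _ =>
   destruct (IH _ _ Hs ltac:(simpl; congruence)) as [D [D1 D2]] end.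

Lemma step_bd : forall A th1 B, step A th1 B -> forall C th2, step C th2 B ->
  lab_key th1 <> lab_key th2 -> exists D, step D th2 A /\ step D th1 C.
Proof.
  intros A th1 B H; induction H; intros C th2 H' Hk; inversion H'; subst;
    simpl in *; try rewrite !lab_key_pre in *; try kc; try congruence.
  - ihd D D1 D2. exists (Keyed a k D); split; stp.
  - ihd D D1 D2. exists (Res D l); split; stp.
  - ihd D D1 D2. exists (Par D Y); split; stp.
  - exists (Par X X0); split; stp.
  - ihd D D1 D2. exists (Par D Y0); split; stp.
  - exists (Par X0 X); split; stp.
  - ihd D D1 D2. exists (Par Y D); split; stp.
  - ihd D D1 D2. exists (Par X0 D); split; stp.
  - ihd D D1 D2. exists (Par D Y); split; stp.
  - ihd D D1 D2. exists (Par X D); split; stp.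
  - destruct (IHstep1 _ _ H5 ltac:(simpl; congruence)) as [D [D1 D2]].
    destruct (IHstep2 _ _ H6 ltac:(simpl; congruence)) as [D0 [D3 D4]].
    exists (Par D D0); split; stp.
  - ihd D D1 D2. exists (Sum D Y); split; stp.
  - ihd D D1 D2. exists (Sum Y D); split; stp.
Qed.
Lemma step_ind : forall A th1 B, step A th1 B -> forall C th2, step C th2 B ->
  lab_key th1 <> lab_key th2 -> indep th1 th2.
Proof.
  intros A th1 B H; induction H; intros C th2 H' Hk; inversion H'; subst;
    simpl in *; try rewrite !lab_key_pre in *; try kc; try congruence.
  all: try (match goal with IH : forall C th2, step C th2 ?X' -> _ -> indep _ _,
   Hs : step _ _ ?X' |- _ => pose proof (IH _ _ Hs ltac:(simpl; congruence)) end).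
  all: try solve [constructor; auto].
  all: try solve [apply (ind_P2 DL); auto].
  all: try solve [apply (ind_P2 DR); auto].
  all: try solve [apply (ind_S1 DL); simpl; auto].
  all: try solve [apply (ind_S1 DR); simpl; auto].
  all: try solve [apply (ind_S2 DL); simpl; auto].
  all: try solve [apply (ind_S2 DR); simpl; auto].
  all: try assumption.
  apply ind_S3; [apply (IHstep1 _ _ H5)|apply (IHstep2 _ _ H6)]; simpl; congruence.
Qed.
Lemma notin_fwd : forall Y th Y1 k, step Y th Y1 -> ~ inkeys k Y -> k <> lab_key th -> ~ inkeys k Y1.
Proof. intros Y th Y1 k H H1 H2 H3. apply (step_keys _ _ _ H) in H3. tauto. Qed.

Ltac ihe E E1 E2 := match goal with IH : forall th W1, step ?X' th W1 -> _ -> _ -> exists E, _,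
   Hs : step ?X' _ _ |- _ =>
   destruct (IH _ _ Hs ltac:(simpl in *; tauto) ltac:(simpl in *; congruence)) as [E [E1 E2]] end.

Ltac stp2 := first [ solve [eapply st_act; eauto using notin_back, notin_fwd]
  | solve [eapply st_pre; eauto using notin_back, notin_fwd]
  | solve [eapply st_res; eauto using notin_back, notin_fwd]
  | solve [eapply st_parL; eauto using notin_back, notin_fwd]
  | solve [eapply st_parR; eauto using notin_back, notin_fwd]
  | solve [eapply st_syn; eauto using notin_back, notin_fwd]
  | solve [eapply st_sumL; eauto using notin_back, nokeys_back]
  | solve [eapply st_sumR; eauto using notin_back, nokeys_back] ].

Lemma step_fd0 : forall D thm W, step D thm W -> forall th W1, step W th W1 ->
  ~ ord W1 (lab_key thm) (lab_key th) -> lab_key thm <> lab_key th ->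
  exists E, step D th E /\ step E thm W1.
Proof.
  intros D thm W H; induction H; intros th2 W1 H' Ho Hmp; inversion H'; subst;
    simpl in *; try rewrite !lab_key_pre in *; try kc.
  - exfalso; apply Ho; right; split; auto. eapply step_tgt_key; eauto.
  - ihe E E1 E2. exists (Keyed a k E); split; stp2.
  - ihe E E1 E2. exists (Res E l); split; stp2.
  - ihe E E1 E2. exists (Par E Y); split; stp2.
  - exists (Par X X'0); split; stp2.
  - ihe E E1 E2. exists (Par E Y'); split; stp2.
  - exists (Par X'0 X); split; stp2.
  - ihe E E1 E2. exists (Par Y E); split; stp2.
  - ihe E E1 E2. exists (Par X'0 E); split; stp2.
  - ihe E E1 E2. exists (Par E Y); split; stp2.
  - ihe E E1 E2. exists (Par X E); split; stp2.
  - destruct (IHstep1 _ _ H3 ltac:(simpl in *; tauto) ltac:(simpl in *; congruence)) as [E [E1 E2]].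
    destruct (IHstep2 _ _ H6 ltac:(simpl in *; tauto) ltac:(simpl in *; congruence)) as [E0 [E3 E4]].
    exists (Par E E0); split; stp2.
  - ihe E E1 E2. exists (Sum E Y); split; stp2.
  - ihe E E1 E2. exists (Sum Y E); split; stp2.
Qed.

Lemma step_fd : forall D thm W, step D thm W -> forall th W1, step W th W1 ->
  ~ ord W1 (lab_key thm) (lab_key th) -> exists E, step D th E /\ step E thm W1.
Proof.
  intros. eapply step_fd0; eauto. intro E.
  apply (step_fresh _ _ _ H0). rewrite <- E. eapply step_tgt_key; eauto.
Qed.
Lemma path1 : forall t, valid t -> path (src t) [t] (tgt t).
Proof. intros t H. apply path_cons; auto. constructor. Qed.

Lemma sim_lab : forall t t', sim t t' -> lab t = lab t' /\ fwd t = fwd t'.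
Proof.
  intros t t' H; induction H.
  - split; congruence.
  - auto.
  - destruct IHsim; split; congruence.
  - destruct IHsim1, IHsim2; split; congruence.
Qed.

Lemma valid_inv : forall t, valid t -> valid (inv t).
Proof. intros [a b c d]; unfold valid, inv; simpl; destruct c; simpl; auto. Qed.

Lemma inv_inv : forall t, inv (inv t) = t.
Proof. intros [a b c d]; unfold inv; simpl; rewrite Bool.negb_involutive; reflexivity. Qed.

Lemma sim_inv : forall t t', sim t t' -> sim (inv t) (inv t').
Proof.
  intros t t' H; induction H.
  - apply (sim_square (inv t) u' u (inv t')); auto using valid_inv; simpl; try congruence.
    destruct H11 as [_ Hi]. split.
    + exists [u']. unfold inv; simpl. rewrite <- H4. apply path1; auto.
    + unfold inv; simpl. rewrite H7. auto.
  - apply sim_refl.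
  - apply sim_sym; auto.
  - eapply sim_trans; eauto.
Qed.

Lemma cls_eq : forall t t', sim t t' -> cls t = cls t'.
Proof.
  intros t t' H. unfold cls. apply functional_extensionality; intro u.
  apply propositional_extensionality; split; intro H1.
  - eapply sim_trans; [apply sim_sym; eauto| auto].
  - eapply sim_trans; eauto.
Qed.

Lemma cls_sim : forall t t', cls t = cls t' -> sim t t'.
Proof.
  intros t t' H. assert (cls t' t') by apply sim_refl. rewrite <- H in H0. exact H0.
Qed.

Inductive bp (k : nat) (X : proc) : proc -> Prop :=
| bp_refl : bp k X X
| bp_step : forall W W' th, bp k X W -> step W' th W -> lab_key th <> k -> bp k X W'.

Lemma bp_trans : forall k A B C, bp k A B -> bp k B C -> bp k A C.
Proof. intros k A B C H1 H2; induction H2; auto. eapply bp_step; eauto. Qed.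

Lemma bp_first : forall k X W, bp k X W -> W = X \/ exists Y th, step Y th X.
Proof. intros k X W H; induction H; auto. destruct IHbp as [E|E]; subst; eauto. Qed.

Lemma bp_propk : forall X th X' W, step X th X' -> bp (lab_key th) X' W ->
  exists D thD, step D thD W /\ lab_key thD = lab_key th.
Proof.
  intros X th X' W Hs Hb. induction Hb.
  - eauto.
  - destruct IHHb as [D [thD [H1 H2]]].
    destruct (step_bd _ _ _ H _ _ H1) as [V [V1 V2]]; [congruence|]. eauto.
Qed.

Lemma bp_prop : forall j X' W, bp j X' W -> forall X th, step X th X' -> lab_key th <> j ->
  bp j X W \/ exists D thD, step D thD W /\ lab_key thD = lab_key th /\ bp j X D.
Proof.
  intros j X' W Hb; induction Hb; intros X0 th0 Hs Hk.
  - right. exists X0, th0. repeat split; auto. constructor.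
  - destruct (IHHb _ _ Hs Hk) as [H2|[D [thD [H2 [H3 H4]]]]].
    + left. eapply bp_step; eauto.
    + destruct (PeanoNat.Nat.eq_dec (lab_key th) (lab_key th0)) as [E|E].
      * destruct (step_det _ _ _ H _ _ H2 ltac:(congruence)); subst. auto.
      * destruct (step_bd _ _ _ H _ _ H2 ltac:(congruence)) as [V [V1 V2]].
        right. exists V, thD. repeat split; auto. eapply bp_step; eauto.
Qed.


Lemma bp_same : forall X th X' W, step X th X' -> bp (lab_key th) X' W ->
  forall A thA, step A thA W -> lab_key thA = lab_key th ->
  sim (Tr A thA true W) (Tr X th true X').
Proof.
  intros X th X' W Hs Hb. remember (lab_key th) as k. induction Hb; intros A thA HA Hk.
  - destruct (step_det _ _ _ HA _ _ Hs ltac:(congruence)); subst. apply sim_refl.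
  - subst k. destruct (bp_propk _ _ _ _ Hs Hb) as [D [thD [H1 H2]]].
    destruct (step_bd _ _ _ H _ _ H1 ltac:(congruence)) as [V [V1 V2]].
    destruct (step_det _ _ _ V1 _ _ HA ltac:(congruence)); subst.
    eapply sim_trans; [|apply (IHHb D thA H1 H2)].
    apply (sim_square (Tr A thA true W') (Tr A th0 true D) (Tr W' th0 true W) (Tr D thA true W));
      simpl; auto.
    split.
    + exists [Tr A th0 true D]. apply (path1 (Tr A th0 true D)). simpl; auto.
    + simpl. apply (step_ind _ _ _ H1 _ _ H). congruence.
Qed.

Definition Ev (X : proc) (e : event) : Prop :=
  exists s, fwd s = true /\ valid s /\ e = cls s /\ inkeys (lab_key (lab s)) X /\
    bp (lab_key (lab s)) X (tgt s).

Lemma Ev_step : forall X th X', step X th X' -> forall e,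
  (Ev X' e <-> Ev X e \/ e = cls (Tr X th true X')) /\
  ~ (Ev X e /\ e = cls (Tr X th true X')).
Proof.
  intros X th X' Hs e. split; [split|].
  - intros [[sA sth sf sB] [Hf [Hv [He [Hi Hb]]]]]. simpl in *. subst sf. simpl in Hv.
    destruct (PeanoNat.Nat.eq_dec (lab_key sth) (lab_key th)) as [E|E].
    + right. subst e. apply cls_eq. rewrite E in Hb. eapply bp_same; eauto.
    + assert (E' : lab_key th <> lab_key sth) by congruence.
      unfold valid in Hv; simpl in Hv.
      destruct (bp_prop _ _ _ Hb _ _ Hs E') as [H1|[D [thD [H1 [H2 H3]]]]].
      * left. exists (Tr sA sth true sB). simpl. repeat split; auto.
        apply (step_keys _ _ _ Hs) in Hi. destruct Hi; tauto.
      * left. destruct (step_bd _ _ _ Hv _ _ H1 ltac:(rewrite H2; exact E)) as [V [V1 V2]].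
        exists (Tr V sth true D). simpl. repeat split; auto.
        { subst e. apply cls_eq.
          apply (sim_square (Tr sA sth true sB) (Tr sA thD false V) (Tr sB thD false D) (Tr V sth true D));
            simpl; auto.
          split.
          - exists [Tr sA thD false V]. apply (path1 (Tr sA thD false V)). simpl; auto.
          - simpl. apply (step_ind _ _ _ Hv _ _ H1). congruence. }
        { apply (step_keys _ _ _ Hs) in Hi. destruct Hi; tauto. }
  - intros [[s [Hf [Hv [He [Hi Hb]]]]]|He].
    + exists s. repeat split; auto.
      * eapply step_keys_mono; eauto.
      * eapply bp_trans; [|apply Hb]. eapply bp_step; [constructor|eauto|].
        intro E. apply (step_fresh _ _ _ Hs). rewrite E. auto.
    + exists (Tr X th true X'). simpl. repeat split; auto.
      * eapply step_tgt_key; eauto.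
      * constructor.
  - intros [[s [Hf [Hv [He [Hi Hb]]]]] He2]. subst e.
    apply cls_sim, sim_lab in He2. destruct He2 as [E1 _]. simpl in E1.
    apply (step_fresh _ _ _ Hs). rewrite <- E1. auto.
Qed.
Definition ind (A : Prop) : Z := if dec A then 1%Z else 0%Z.

Lemma sharp_path : forall P0 r X, path P0 r X -> forall t0, fwd t0 = true ->
  sharp r (cls t0) = (ind (Ev X (cls t0)) - ind (Ev P0 (cls t0)))%Z.
Proof.
  intros P0 r X H; induction H; intros t0 Hf0.
  - simpl. lia.
  - simpl. rewrite IHpath by auto. clear IHpath.
    destruct t as [a b c d]; simpl in *. unfold valid in H; simpl in H.
    destruct c.
    + destruct (Ev_step _ _ _ H (cls t0)) as [[I1 I2] I3].
      unfold ind. destruct (dec (cls t0 (Tr a b true d))) as [S|S].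
      * assert (E : cls t0 = cls (Tr a b true d)) by (apply cls_eq; auto).
        destruct (dec (Ev d (cls t0))) as [F1|F1]; [|exfalso; tauto].
        destruct (dec (Ev a (cls t0))) as [F2|F2]; [exfalso; tauto|].
        destruct (dec (Ev Q (cls t0))); lia.
      * destruct (dec (ebar (cls t0) (Tr a b true d))) as [B|B].
        { exfalso. destruct B as [s [B1 B2]]. apply sim_lab in B1. apply sim_lab in B2.
          destruct B1 as [_ F1]. destruct B2 as [_ F2]. unfold inv in F2; simpl in F2.
          rewrite <- F1, Hf0 in F2. discriminate. }
        assert (NE : cls t0 <> cls (Tr a b true d)) by (intro E; apply S; apply cls_sim; auto).
        destruct (dec (Ev d (cls t0))) as [F1|F1];
        destruct (dec (Ev a (cls t0))) as [F2|F2];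
        destruct (dec (Ev Q (cls t0))); try lia; exfalso; tauto.
    + destruct (Ev_step _ _ _ H (cls t0)) as [[I1 I2] I3].
      unfold ind. destruct (dec (cls t0 (Tr a b false d))) as [S|S].
      { exfalso. apply sim_lab in S. simpl in S. destruct S; congruence. }
      assert (BE : ebar (cls t0) (Tr a b false d) <-> cls t0 = cls (Tr d b true a)).
      { split.
        - intros [s [B1 B2]]. apply cls_eq. eapply sim_trans; [apply B1|].
          apply sim_inv in B2. rewrite inv_inv in B2. exact B2.
        - intro E. exists (Tr d b true a). split.
          + apply cls_sim; auto.
          + apply sim_refl. }
      destruct (dec (ebar (cls t0) (Tr a b false d))) as [B|B].
      * apply BE in B.
        destruct (dec (Ev a (cls t0))) as [F1|F1]; [|exfalso; tauto].
        destruct (dec (Ev d (cls t0))) as [F2|F2]; [exfalso; tauto|].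
        destruct (dec (Ev Q (cls t0))); lia.
      * destruct (dec (Ev d (cls t0))) as [F1|F1];
        destruct (dec (Ev a (cls t0))) as [F2|F2];
        destruct (dec (Ev Q (cls t0))); try lia; exfalso; tauto.
Qed.

Lemma Ev_rooted : forall P0 e, rooted P0 -> ~ Ev P0 e.
Proof.
  intros P0 e Hr [s [Hf [Hv [He [Hi Hb]]]]]. apply Hr.
  destruct (bp_first _ _ _ Hb) as [E|[Y [th E]]]; eauto.
  destruct s; simpl in *; subst; unfold valid in Hv; simpl in Hv. eauto.
Qed.

Lemma standard_rooted : forall P, standard P -> rooted P.
Proof. intros P H [th [P' Hs]]. apply step_tgt_key in Hs. apply (H _ Hs). Qed.

Inductive freach : proc -> proc -> Prop :=
| fr_refl : forall X, freach X X
| fr_step : forall X th Y Z, step X th Y -> freach Y Z -> freach X Z.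

Lemma freach_snoc : forall X Y, freach X Y -> forall th Z, step Y th Z -> freach X Z.
Proof. intros X Y H; induction H; intros; eauto using freach. Qed.

Lemma freach_path : forall X Y, freach X Y -> exists r, path X r Y.
Proof.
  intros X Y H; induction H.
  - exists []; constructor.
  - destruct IHfreach as [r Hr]. exists (Tr X th true Y :: r).
    apply (path_cons (Tr X th true Y)); auto.
Qed.

Lemma in_ev_Ev : forall X e, in_ev X e -> Ev X e.
Proof.
  intros X e [[t0 [Hf [Hv E]]] [P0 [r [Hr [Hp Hs]]]]]. subst e.
  rewrite (sharp_path _ _ _ Hp t0 Hf) in Hs. unfold ind in Hs.
  destruct (dec (Ev X (cls t0))); auto.
  destruct (dec (Ev P0 (cls t0))); lia.
Qed.

Lemma Ev_in_ev : forall P X e, standard P -> freach P X -> Ev X e -> in_ev X e.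
Proof.
  intros P X e HP HX HE. split.
  - destruct HE as [s [Hf [Hv [He _]]]]. exists s; auto.
  - destruct (freach_path _ _ HX) as [r Hr]. exists P, r. repeat split; auto.
    + apply standard_rooted; auto.
    + destruct HE as [s [Hf [Hv [He [Hi Hb]]]]]. subst e.
      rewrite (sharp_path _ _ _ Hr s Hf). unfold ind.
      destruct (dec (Ev X (cls s))) as [A|A]; [|exfalso; apply A; exists s; repeat split; auto].
      destruct (dec (Ev P (cls s))) as [B|B].
      * exfalso. eapply Ev_rooted; eauto. apply standard_rooted; auto.
      * lia.
Qed.
Definition haskey (e : event) (k : nat) : Prop := exists s, e = cls s /\ lab_key (lab s) = k.

Lemma haskey_mem : forall e k t, haskey e k -> e t -> lab t = lab t /\ lab_key (lab t) = k.
Proof.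
  intros e k t [s [E K]] Ht. subst e. split; auto. apply sim_lab in Ht. destruct Ht as [L _].
  rewrite <- L; auto.
Qed.

Lemma haskey_uniq : forall e k1 k2, haskey e k1 -> haskey e k2 -> k1 = k2.
Proof.
  intros e k1 k2 [s1 [E1 K1]] [s2 [E2 K2]]. subst e k1 k2.
  apply cls_sim, sim_lab in E2. destruct E2 as [L _]. rewrite L; auto.
Qed.

Lemma Ev_haskey : forall X e, Ev X e -> exists k, haskey e k /\ inkeys k X.
Proof. intros X e [s [_ [_ [E [I _]]]]]. exists (lab_key (lab s)). split; auto. exists s; auto. Qed.

Lemma Ev_key : forall X e k, Ev X e -> haskey e k -> inkeys k X.
Proof.
  intros X e k H1 H2. destruct (Ev_haskey _ _ H1) as [k' [H3 H4]].
  rewrite (haskey_uniq _ _ _ H2 H3). auto.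
Qed.

Definition Inv (X : proc) : Prop :=
  (forall k, inkeys k X -> exists e, Ev X e /\ haskey e k) /\
  (forall e1 e2 k, Ev X e1 -> Ev X e2 -> haskey e1 k -> haskey e2 k -> e1 = e2).

Lemma Inv_step : forall X th X', step X th X' -> Inv X -> Inv X'.
Proof.
  intros X th X' Hs [Ia Ib]. pose proof (Ev_step _ _ _ Hs) as ES.
  assert (HK : haskey (cls (Tr X th true X')) (lab_key th)) by (exists (Tr X th true X'); auto).
  split.
  - intros k Hk. apply (step_keys _ _ _ Hs) in Hk. destruct Hk as [Hk|Hk].
    + destruct (Ia _ Hk) as [e [E1 E2]]. exists e. split; auto. apply (ES e). auto.
    + subst. exists (cls (Tr X th true X')). split; auto. apply (ES _). auto.
  - intros e1 e2 k H1 H2 K1 K2. apply (ES _) in H1. apply (ES _) in H2.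
    destruct H1 as [H1|H1]; destruct H2 as [H2|H2].
    + eapply Ib; eauto.
    + subst. exfalso. rewrite (haskey_uniq _ _ _ K2 HK) in K1. apply (step_fresh _ _ _ Hs).
      eapply Ev_key; eauto.
    + subst. exfalso. rewrite (haskey_uniq _ _ _ K1 HK) in K2. apply (step_fresh _ _ _ Hs).
      eapply Ev_key; eauto.
    + subst; auto.
Qed.

Lemma Inv_standard : forall P, standard P -> Inv P.
Proof.
  intros P HP. split.
  - intros k Hk; destruct (HP k Hk).
  - intros e1 e2 k H1. destruct (Ev_haskey _ _ H1) as [k' [_ Hk]]. destruct (HP k' Hk).
Qed.

Lemma freach_Inv : forall X Z, freach X Z -> Inv X -> Inv Z.
Proof. intros X Z H; induction H; eauto using Inv_step. Qed.

Lemma freach_trans_ind : forall (Pr : proc -> Prop) P,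
  Pr P -> (forall X th X', freach P X -> Pr X -> step X th X' -> Pr X') ->
  forall X, freach P X -> Pr X.
Proof.
  intros Pr P H0 HS X HX.
  assert (G : forall Y Z, freach Y Z -> freach P Y -> Pr Y -> Pr Z).
  { intros Y Z H; induction H; intros; auto. apply IHfreach.
    - eapply freach_snoc; eauto.
    - eapply HS; eauto. }
  eapply G; eauto. constructor.
Qed.

Inductive breach (X : proc) : proc -> Prop :=
| br_refl : breach X X
| br_step : forall W W' th, breach X W -> step W' th W -> breach X W'.

Lemma breach_trans : forall A B C, breach A B -> breach B C -> breach A C.
Proof. intros A B C H1 H2; induction H2; auto. eapply br_step; eauto. Qed.

Lemma breach_ord : forall X W, breach X W -> forall a b, ord W a b -> ord X a b.
Proof. intros X W H; induction H; intros; eauto using ord_mono. Qed.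

Lemma breach_keys : forall X W, breach X W -> forall k, inkeys k W -> inkeys k X.
Proof. intros X W H; induction H; intros; eauto using step_keys_mono. Qed.

Definition Dep (X : proc) (a b : nat) : Prop :=
  forall W, breach X W -> inkeys b W -> inkeys a W.

Lemma ord_dep : forall X a b, ord X a b -> Dep X a b.
Proof.
  intros X a b Ho.
  assert (G : forall W, breach X W -> ord W a b \/ ~ inkeys b W).
  { intros W H; induction H; auto. destruct IHbreach as [H1|H1].
    - destruct (PeanoNat.Nat.eq_dec b (lab_key th)) as [E|E].
      + right. subst. apply (step_fresh _ _ _ H0).
      + left. eapply ord_back; eauto.
    - right. eapply notin_back; eauto. }
  intros W H1 H2. destruct (G W H1) as [H3|H3]; [apply ord_keys in H3; tauto| tauto].
Qed.

Lemma leX_dep : forall X a b, leX X a b -> Dep X a b.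
Proof.
  intros X a b H; induction H.
  - apply ord_dep; auto.
  - intros W _ H; auto.
  - intros W H1 H2. apply IHclos_refl_trans1; auto.
Qed.

Lemma lift : forall X W0, breach X W0 -> forall X' th, step X th X' ->
  (forall m, inkeys m X -> ~ inkeys m W0 -> ~ ord X' m (lab_key th)) ->
  exists W, breach X' W /\ step W0 th W.
Proof.
  intros X W0 H; induction H; intros X' th0 Hs Hm.
  - exists X'. split; auto. constructor.
  - destruct (IHbreach X' th0 Hs) as [W1 [B1 S1]].
    { intros m H1 H2. apply Hm; auto. eapply notin_back; eauto. }
    destruct (step_fd _ _ _ H0 _ _ S1) as [E [E1 E2]].
    + intro Ho. apply breach_ord with (X := X') in Ho; auto.
      revert Ho. apply Hm.
      * eapply breach_keys; eauto. eapply step_tgt_key; eauto.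
      * eapply step_fresh; eauto.
    + exists E. split; auto. eapply br_step; eauto.
Qed.

Lemma sub : forall P, standard P -> forall X, freach P X ->
  forall (S : nat -> Prop), (forall c d, ord X c d -> S d -> S c) ->
  exists W, breach X W /\ forall c, inkeys c W <-> inkeys c X /\ S c.
Proof.
  intros P HP. apply (freach_trans_ind (fun X => forall (S : nat -> Prop),
    (forall c d, ord X c d -> S d -> S c) ->
    exists W, breach X W /\ forall c, inkeys c W <-> inkeys c X /\ S c) P).
  - intros S _. exists P. split; [constructor|]. intro c; split; [intro H; destruct (HP c H)|].
    intros [H _]; destruct (HP c H).
  - intros X th X' _ IH Hs S HS.
    destruct (IH S) as [W0 [B0 K0]].
    { intros c d H1 H2. apply (HS c d); auto. eapply ord_mono; eauto. }
    destruct (classic (S (lab_key th))) as [Sp|Sp].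
    + destruct (lift _ _ B0 _ _ Hs) as [W [B1 S1]].
      { intros m H1 H2 H3. apply H2. apply K0. split; auto. eapply HS; eauto. }
      exists W. split; auto. intro c. rewrite (step_keys _ _ _ S1), (step_keys _ _ _ Hs), K0.
      split; [intros [[A B]|A]; subst; auto| intros [[A|A] B]; subst; auto].
    + exists W0. split.
      * eapply breach_trans; [|apply B0]. eapply br_step; [constructor|eauto].
      * intro c. rewrite (step_keys _ _ _ Hs), K0.
        split; [intros [A B]; auto| intros [[A|A] B]; subst; tauto].
Qed.

Lemma dep_leX : forall P, standard P -> forall X, freach P X -> forall a b,
  inkeys b X -> Dep X a b -> leX X a b.
Proof.
  intros P HP X HX a b Hb HD. apply NNPP; intro HN.
  destruct (sub P HP X HX (fun c => leX X c b)) as [W [B K]].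
  { intros c d H1 H2. eapply rt_trans; [apply rt_step; eauto| auto]. }
  assert (inkeys b W) by (apply K; split; auto; apply rt_refl).
  apply HN. apply K. apply HD; auto.
Qed.

Lemma match_back : forall (Rr : proc -> proc -> Prop),
  (forall X Y, Rr X Y -> forall th' Y'', step Y'' th' Y ->
     exists th X'', step X'' th X /\ lab_key th = lab_key th' /\ Rr X'' Y'') ->
  forall Y W', breach Y W' -> forall X, Rr X Y -> (forall k, inkeys k X <-> inkeys k Y) ->
  exists W, breach X W /\ Rr W W' /\ (forall k, inkeys k W <-> inkeys k W').
Proof.
  intros Rr HR Y W' H; induction H; intros X0 HX HK.
  - exists X0; split; auto. constructor.
  - destruct (IHbreach X0 HX HK) as [W1 [B1 [R1 K1]]].
    destruct (HR _ _ R1 _ _ H0) as [th1 [X'' [S1 [E1 R2]]]].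
    exists X''. split; [eapply br_step; eauto|]. split; auto.
    intro k. pose proof (step_keys _ _ _ S1 k) as A1. pose proof (step_keys _ _ _ H0 k) as A2.
    pose proof (step_fresh _ _ _ S1) as F1. pose proof (step_fresh _ _ _ H0) as F2.
    split; intro Hk.
    + assert (inkeys k W) by (apply K1; apply A1; auto).
      apply A2 in H1. destruct H1; auto. subst. exfalso; apply F1; congruence.
    + assert (inkeys k W1) by (apply K1; apply A2; auto).
      apply A1 in H1. destruct H1; auto. subst. exfalso; apply F2; congruence.
Qed.

Lemma dep_transfer : forall (Rr : proc -> proc -> Prop),
  (forall X Y, Rr X Y -> forall th' Y'', step Y'' th' Y ->
     exists th X'', step X'' th X /\ lab_key th = lab_key th' /\ Rr X'' Y'') ->
  forall X Y, Rr X Y -> (forall k, inkeys k X <-> inkeys k Y) ->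
  forall a b, Dep X a b -> Dep Y a b.
Proof.
  intros Rr HR X Y HXY HK a b HD W' B Hb.
  destruct (match_back Rr HR Y W' B X HXY HK) as [W [B1 [_ K1]]].
  apply K1. apply HD; auto. apply K1; auto.
Qed.
Definition Gm (X Y : proc) (e e' : event) : Prop :=
  Ev X e /\ Ev Y e' /\ exists k, haskey e k /\ haskey e' k.

Definition Rkp (P Q : proc) (RF : proc -> proc -> Prop) (X Y : proc) (F : evmap) : Prop :=
  freach P X /\ freach Q Y /\ RF X Y /\ (forall k, inkeys k X <-> inkeys k Y) /\
  (forall e e', F e e' <-> Gm X Y e e') /\ label_preserving F.

Lemma in_ev_iff : forall P X e, standard P -> freach P X -> (in_ev X e <-> Ev X e).
Proof. intros; split; [apply in_ev_Ev|eapply Ev_in_ev; eauto]. Qed.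

Lemma ext_iff : forall X th X'' Y th' Y'' F,
  step X th X'' -> step Y th' Y'' -> lab_key th = lab_key th' ->
  (forall k, inkeys k X <-> inkeys k Y) ->
  (forall e e', F e e' <-> Gm X Y e e') ->
  forall e e', ext F (cls (Tr X th true X'')) (cls (Tr Y th' true Y'')) e e' <-> Gm X'' Y'' e e'.
Proof.
  intros X th X'' Y th' Y'' F S1 S2 Ek HK HF e e'.
  pose proof (Ev_step _ _ _ S1) as ES1. pose proof (Ev_step _ _ _ S2) as ES2.
  assert (HK1 : haskey (cls (Tr X th true X'')) (lab_key th)) by (exists (Tr X th true X''); auto).
  assert (HK2 : haskey (cls (Tr Y th' true Y'')) (lab_key th)) by (exists (Tr Y th' true Y''); auto).
  unfold ext. rewrite HF. split.
  - intros [[G1 [G2 G3]]|[E1 E2]].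
    + split; [apply ES1; auto|split; [apply ES2; auto|auto]].
    + subst. split; [apply ES1; auto|split; [apply ES2; auto|eauto]].
  - intros [G1 [G2 [k [K1 K2]]]]. apply ES1 in G1. apply ES2 in G2.
    destruct G1 as [G1|G1]; destruct G2 as [G2|G2].
    + left. split; auto. split; eauto.
    + exfalso. subst e'. rewrite (haskey_uniq _ _ _ K2 HK2) in K1.
      apply (step_fresh _ _ _ S1). eapply Ev_key; eauto.
    + exfalso. subst e. rewrite (haskey_uniq _ _ _ K1 HK1) in K2.
      apply (step_fresh _ _ _ S2). rewrite <- Ek. eapply Ev_key; eauto.
    + right; auto.
Qed.

Lemma keys_next : forall X th X'' Y th' Y'',
  step X th X'' -> step Y th' Y'' -> lab_key th = lab_key th' ->
  (forall k, inkeys k X <-> inkeys k Y) -> forall k, inkeys k X'' <-> inkeys k Y''.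
Proof.
  intros. rewrite (step_keys _ _ _ H), (step_keys _ _ _ H0), H2, H1. tauto.
Qed.

Lemma lp_ext : forall F X th X'' Y th' Y'', label_preserving F ->
  lab_act th = lab_act th' ->
  label_preserving (ext F (cls (Tr X th true X'')) (cls (Tr Y th' true Y''))).
Proof.
  intros F X th X'' Y th' Y'' HL HA e e' [H|[E1 E2]] t t' Ht Ht'.
  - eapply HL; eauto.
  - subst. apply sim_lab in Ht. apply sim_lab in Ht'. simpl in *.
    destruct Ht as [L1 _]; destruct Ht' as [L2 _]. rewrite <- L1, <- L2. auto.
Qed.

Theorem proposition7p18 (P Q : proc) :
  standard P -> standard Q -> FR_equiv P Q -> KP_equiv P Q.
Proof.
  intros HP HQ [RF [HRF HPQ]].
  exists (Rkp P Q RF), empty_map.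
  rewrite (nokeys_orig P HP), (nokeys_orig Q HQ).
  assert (R0 : Rkp P Q RF P Q empty_map).
  { unfold Rkp. split; [constructor|]. split; [constructor|]. split; [auto|].
    split; [intro k; split; intro H; [destruct (HP k H)|destruct (HQ k H)]|].
    split; [intros e e'; split; [intros []|]|].
    - intros [G1 _]. destruct (Ev_haskey _ _ G1) as [k [_ Hk]]. destruct (HP k Hk).
    - intros e e' []. }
  split; [split; auto|auto].
  intros X Y F [FX [FY [RXY [HK [HF HL]]]]].
  assert (IX : Inv X) by (eapply freach_Inv; eauto using Inv_standard).
  assert (IY : Inv Y) by (eapply freach_Inv; eauto using Inv_standard).
  split; [split; [|split]|split].
  -
    split; [|split; [|split; [|split]]].
    + intros e e' H. apply HF in H. destruct H as [G1 [G2 _]].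
      split; [apply (Ev_in_ev P X)|apply (Ev_in_ev Q Y)]; auto.
    + intros e H. apply (in_ev_iff P X e HP FX) in H.
      destruct (Ev_haskey _ _ H) as [k [K1 K2]].
      destruct (proj1 IY k (proj1 (HK k) K2)) as [e' [E1 E2]].
      exists e'. apply HF. repeat split; eauto.
    + intros e e1 e2 H1 H2. apply HF in H1. apply HF in H2.
      destruct H1 as [_ [A1 [k1 [B1 C1]]]]; destruct H2 as [_ [A2 [k2 [B2 C2]]]].
      rewrite (haskey_uniq _ _ _ B1 B2) in C1. eapply (proj2 IY); eauto.
    + intros e1 e2 e' H1 H2. apply HF in H1. apply HF in H2.
      destruct H1 as [A1 [_ [k1 [B1 C1]]]]; destruct H2 as [A2 [_ [k2 [B2 C2]]]].
      rewrite (haskey_uniq _ _ _ C1 C2) in B1. eapply (proj2 IX); eauto.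
    + intros e' H. apply (in_ev_iff Q Y e' HQ FY) in H.
      destruct (Ev_haskey _ _ H) as [k [K1 K2]].
      destruct (proj1 IX k (proj2 (HK k) K2)) as [e [E1 E2]].
      exists e. apply HF. repeat split; eauto.
  - auto.
  -
    intros e1 e1' e2 e2' H1 H2 t1 t2 t1' t2' T1 T2 T1' T2'.
    apply HF in H1. apply HF in H2.
    destruct H1 as [A1 [A1' [k1 [B1 B1']]]]; destruct H2 as [A2 [A2' [k2 [B2 B2']]]].
    rewrite (proj2 (haskey_mem _ _ _ B1 T1)), (proj2 (haskey_mem _ _ _ B2 T2)),
      (proj2 (haskey_mem _ _ _ B1' T1')), (proj2 (haskey_mem _ _ _ B2' T2')).
    assert (X2 : inkeys k2 X) by (eapply Ev_key; eauto).
    assert (Y2 : inkeys k2 Y) by (eapply Ev_key; eauto).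
    split; intro Hle.
    + apply (dep_leX Q HQ Y FY); auto. apply (dep_transfer RF) with (X := X); auto.
      * intros X0 Y0 R0' th' Y'' S. apply (HRF X0 Y0 R0') in S.
        destruct S as [th [X'' [S1 [_ [E R1]]]]]. eauto.
      * apply leX_dep; auto.
    + apply (dep_leX P HP X FX); auto. apply (dep_transfer (fun A B => RF B A)) with (X := Y); auto.
      * intros X0 Y0 R0' th' Y'' S. apply (HRF Y0 X0 R0') in S.
        destruct S as [th [X'' [S1 [_ [E R1]]]]]. exists th, X''. repeat split; auto.
      * intro k; rewrite HK; tauto.
      * apply leX_dep; auto.
  - intros th X'' S.
    destruct (proj1 (HRF X Y RXY) th X'' S) as [th' [Y'' [S' [EA [EK R']]]]].
    exists th', Y''. split; auto.
    unfold Rkp. split; [eapply freach_snoc; eauto|]. split; [eapply freach_snoc; eauto|].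
    split; [auto|]. split; [apply (keys_next X th X'' Y th' Y''); auto|].
    split; [apply (ext_iff X th X'' Y th' Y'' F); auto|]. apply lp_ext; auto.
  - intros th' Y'' S'.
    destruct (proj1 (proj2 (HRF X Y RXY)) th' Y'' S') as [th [X'' [S [EA [EK R']]]]].
    exists th, X''. split; auto.
    unfold Rkp. split; [eapply freach_snoc; eauto|]. split; [eapply freach_snoc; eauto|].
    split; [auto|]. split; [apply (keys_next X th X'' Y th' Y''); auto|].
    split; [apply (ext_iff X th X'' Y th' Y'' F); auto|]. apply lp_ext; auto.
Qed.
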